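(* Let $\ell\ge 2$, $A\ge 2$, $H\ge \ell+1$ be integers and let $\pi$ be an $\ell$-step model predictive control (MPC) agent whose values $\{V_h(s)\}$ are computed by a procedure satisfying the following assumption: for every $h\in[H]$ there is a function $f_h:\mathcal{D}\to\mathbb{R}_+$, where $\mathcal{D}$ is the set of Borel distributions on $[0,1]^A$, such that whenever $s$ is a semi-terminal state at step $h$ with joint reward distribution $\mathcal{R}_h(s)\in\mathcal{D}$ over its actions, $V_h(s)=f_h(\mathcal{R}_h(s))$. Then there exists an episodic tabular MDP with $A$ actions, horizon $H$, at most $S\le A^{\ell}+\ell+1$ states and deterministic transitions, and an initial state $s_1$, for which $\frac{V^{\pi}_1(s_1)}{V^*_1(s_1)}\le A^{1-\ell/2}$, where $V^*_1(s_1)$ is the optimal value among $\ell$-step lookahead policies. Moreover, in the constructed environments there exists an MPC agent (for some choice of values) whose value equals $V^*_1(s_1)$.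
   Context: Episodic tabular MDP: finite state space $\mathcal{S}$, $A$ actions, horizon $H$, rewards in $[0,1]$ with distributions $\mathcal{R}_h(s,a)$, transitions $P_h$, independent across steps (arbitrarily correlated across state-actions within a step). $\ell$-step lookahead information $I_{h,\ell_h}(s)$ at step $h$ in state $s$ ($\ell_h=\min\{\ell,H-h+1\}$) consists of the realized rewards and next states along all trajectories from $s$ over steps $h,\dots,h+\ell_h-1$ under every deterministic Markov policy; for a deterministic Markov policy $\phi$, $\mathfrak{R}_{t\mid h}(s,\phi,I)$ and $\mathfrak{s}_{t\mid h}(s,\phi,I)$ denote the reward at step $t$ and the state at step $t$ obtained from $s_h=s$ following $\phi$ under the realization $I$. An $\ell$-step lookahead policy chooses actions using the current state and the lookahead observed at each step. An $\ell$-step MPC agent is specified by values $V_h(s)$ for all $h,s$; at each step $h$ in state $s$, upon observing $I=I_{h,\ell_h}(s)$, it computes $\phi\in\arg\max_{\phi}\{\sum_{t=h}^{h+\ell_h-1}\mathfrak{R}_{t\mid h}(s,\phi,I)+V_{h+\ell_h}(\mathfrak{s}_{h+\ell_h\mid h}(s,\phi,I))\}$ over deterministic Markov policies, plays only $\phi_h(s)$, and repeats at the next step with the updated lookahead. A state $s_T$ is terminal if for all $h,a$ it transitions to itself with probability one and yields zero reward; a state $s$ is semi-terminal at step $h$ if every action leads from $s$ to a terminal state with probability one (rewards at $s$ may be random). *)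

(* Defs.v *)
From mathcomp Require Import all_boot all_order all_algebra.
From mathcomp Require Import reals exp.
Set Implicit Arguments. Unset Strict Implicit. Unset Printing Implicit Defensive.
Import Order.TTheory GRing.Theory Num.Theory.
Local Open Scope ring_scope.

(* Steps are 0-based: h = 0, ..., H-1 (paper's step h+1).  The randomness of step h is a single outcome w drawn from
   a finite distribution prob h on 'I_(nK.+1); it determines the rewards
   rew h w s a and the next states nxt h w s a of ALL state-action pairs
   (so arbitrary correlation within a step); outcomes of different steps
   are independent. *)
Section MDP.
Variables (R : realType) (A H : nat).

Record mdp (n : nat) := MDP {
  nK : nat;
  prob : nat -> 'I_nK.+1 -> R;
  rew : nat -> 'I_nK.+1 -> 'I_n -> 'I_A -> R;
  nxt : nat -> 'I_nK.+1 -> 'I_n -> 'I_A -> 'I_n;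
  prob_ge0 : forall h w, (h < H)%N -> 0 <= prob h w;
  prob_sum1 : forall h, (h < H)%N -> \sum_w prob h w = 1;
  rew_range : forall h w s a, (h < H)%N -> 0 <= rew h w s a <= 1 }.

Arguments nK {n} m.
Arguments prob {n} m _ _.
Arguments rew {n} m _ _ _ _.
Arguments nxt {n} m _ _ _ _.

Variable n : nat.
Implicit Types (M : mdp n).

Definition outc M := 'I_(nK M).+1.

Definition lh (ell h : nat) : nat := minn ell (H - h).

Fixpoint stt M (h : nat) (s : 'I_n) (phi : nat -> 'I_n -> 'I_A)
    (ws : nat -> outc M) (k : nat) : 'I_n :=
  match k with
  | 0 => s
  | k'.+1 => let x := stt h s phi ws k' in
             nxt M (h + k') (ws (h + k')) x (phi (h + k') x)
  end.

Definition rwd M h s phi (ws : nat -> outc M) k : R :=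
  let x := stt h s phi ws k in rew M (h + k) (ws (h + k)) x (phi (h + k) x).

(* ws and ws' give the same ell-step lookahead information I_{h,ell_h}(s) *)
Definition info_eq M ell h s (ws ws' : nat -> outc M) : Prop :=
  forall (phi : nat -> 'I_n -> 'I_A) k, (k < lh ell h)%N ->
    rwd h s phi ws k = rwd h s phi ws' k /\
    stt h s phi ws k.+1 = stt h s phi ws' k.+1.

Definition is_lookahead M ell (pi : nat -> 'I_n -> (nat -> outc M) -> 'I_A) :=
  forall h s ws ws', info_eq ell h s ws ws' -> pi h s ws = pi h s ws'.

Fixpoint traj M (pi : nat -> 'I_n -> (nat -> outc M) -> 'I_A) (s1 : 'I_n)
    (ws : nat -> outc M) (k : nat) : 'I_n :=
  match k with
  | 0 => s1
  | k'.+1 => let x := traj pi s1 ws k' in nxt M k' (ws k') x (pi k' x ws)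
  end.

Definition ret M pi s1 (ws : nat -> outc M) : R :=
  \sum_(k < H) rew M k (ws k) (traj pi s1 ws k) (pi k (traj pi s1 ws k) ws).

Definition ws_of M (wf : {ffun 'I_H -> outc M}) : nat -> outc M :=
  fun t => odflt ord0 (omap wf (insub t : option 'I_H)).

Definition value M (pi : nat -> 'I_n -> (nat -> outc M) -> 'I_A) s1 : R :=
  \sum_(wf : {ffun 'I_H -> outc M})
     (\prod_(i < H) prob M i (wf i)) * ret pi s1 (ws_of wf).

Definition Vterm (V : nat -> 'I_n -> R) (t : nat) (x : 'I_n) : R :=
  if (t < H)%N then V t x else 0.

Definition mpc_obj M ell (V : nat -> 'I_n -> R) h s phi (ws : nat -> outc M) : R :=
  \sum_(k < lh ell h) rwd h s phi ws k
  + Vterm V (h + lh ell h) (stt h s phi ws (lh ell h)).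

(* pi is an ell-step MPC agent with values V (any tie-breaking, as long as
   it is a lookahead policy) *)
Definition is_mpc M ell (V : nat -> 'I_n -> R) pi :=
  is_lookahead ell pi /\
  forall h s (ws : nat -> outc M), (h < H)%N ->
    exists phi : nat -> 'I_n -> 'I_A,
      (forall phi', mpc_obj ell V h s phi' ws <= mpc_obj ell V h s phi ws) /\
      phi h s = pi h s ws.

Definition terminal M (x : 'I_n) :=
  forall h w a, (h < H)%N -> 0 < prob M h w ->
    nxt M h w x a = x /\ rew M h w x a = 0.

Definition semi_terminal M h (s : 'I_n) :=
  forall w a, 0 < prob M h w -> terminal M (nxt M h w s a).

(* joint reward distribution R_h(s) on [0,1]^A, as a probability mass function *)
Definition rlaw M h (s : 'I_n) : 'rV[R]_A -> R :=
  fun v => \sum_(w | (\row_a rew M h w s a) == v) prob M h w.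

Definition det_trans M :=
  forall h w w' s a, (h < H)%N -> 0 < prob M h w -> 0 < prob M h w' ->
    nxt M h w s a = nxt M h w' s a.

End MDP.

Arguments is_lookahead {R A H n} M ell pi.
Arguments is_mpc {R A H n} M ell V pi.
Arguments value {R A H n} M pi s1.

(* Main.v *)
Require Import Defs.
From mathcomp Require Import all_boot all_order all_algebra all_fingroup.
From mathcomp Require Import reals exp boolp.
From mathcomp Require Import ring lra zify.
Set Implicit Arguments. Unset Strict Implicit. Unset Printing Implicit Defensive.
Import Order.TTheory GRing.Theory Num.Theory.
Local Open Scope ring_scope.

Definition sel (T : Type) (d : T) (P : T -> Prop) : T :=
  match pselect (exists x, P x) with
  | left e => proj1_sig (cid e)
  | right _ => d end.

Lemma selP (T : Type) (d : T) (P : T -> Prop) : (exists x, P x) -> P (sel d P).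
Proof.
rewrite /sel; case: pselect => // e _; exact: (proj2_sig (cid e)).
Qed.

Section Gen.
Variables (R : realType) (A H n : nat) (M : mdp R A H n).

Lemma stt_ext h s (phi phi' : nat -> 'I_n -> 'I_A) (ws ws' : nat -> outc M) k :
  (forall j, (j < k)%N -> phi (h + j)%N = phi' (h + j)%N /\ ws (h + j)%N = ws' (h + j)%N) ->
  stt h s phi ws k = stt h s phi' ws' k.
Proof.
elim: k => [//|k IH] Hj /=.
rewrite IH; last by move=> j jk; apply: Hj; apply: ltnW.
by case: (Hj k (ltnSn k)) => -> ->.
Qed.

Lemma stt_shift h s phi (ws : nat -> outc M) k :
  stt h s phi ws k.+1 = stt h.+1 (stt h s phi ws 1) phi ws k.
Proof.
elim: k => [//|k IH].
have -> : stt h s phi ws k.+2 = @nxt R A H n M (h + k.+1) (ws (h + k.+1)%N)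
   (stt h s phi ws k.+1) (phi (h + k.+1)%N (stt h s phi ws k.+1)) by [].
rewrite IH /=. rewrite -addSnnS. by [].
Qed.

Lemma obj_info ell V h s (ws ws' : nat -> outc M) :
  info_eq ell h s ws ws' -> forall phi, mpc_obj ell V h s phi ws = mpc_obj ell V h s phi ws'.
Proof.
move=> Hi phi; rewrite /mpc_obj; congr (_ + _).
  by apply: eq_bigr => k _; case: (Hi phi k (ltn_ord k)).
case E: (lh H ell h) => [//|m].
by case: (Hi phi m); rewrite ?E // => _ ->.
Qed.

Lemma obj_local ell V h s (ws : nat -> outc M) phi phi' :
  (forall j, (j < lh H ell h)%N -> phi (h + j)%N = phi' (h + j)%N) ->
  mpc_obj ell V h s phi ws = mpc_obj ell V h s phi' ws.
Proof.
move=> Hj; rewrite /mpc_obj; congr (_ + _).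
  apply: eq_bigr => k _; rewrite /rwd.
  rewrite (@stt_ext h s phi phi' ws ws); last first.
    by move=> j jk; split => //; apply: Hj; apply: ltn_trans (ltn_ord k).
  by rewrite Hj.
rewrite (@stt_ext h s phi phi' ws ws) //.
by move=> j jk; split => //; apply: Hj.
Qed.

Lemma obj_max ell V h s (ws : nat -> outc M) (a0 : 'I_A) :
  exists phi, forall phi', mpc_obj ell V h s phi' ws <= mpc_obj ell V h s phi ws.
Proof.
pose L := lh H ell h.
pose ext (g : {ffun 'I_L -> {ffun 'I_n -> 'I_A}}) : nat -> 'I_n -> 'I_A :=
  fun t x => if (insub (t - h)%N : option 'I_L) is Some i then
               (if (h <= t)%N then g i x else a0) else a0.
pose restr (phi : nat -> 'I_n -> 'I_A) : {ffun 'I_L -> {ffun 'I_n -> 'I_A}} :=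
  [ffun i : 'I_L => [ffun x : 'I_n => phi (h + i)%N x]].
have extK phi : mpc_obj ell V h s (ext (restr phi)) ws = mpc_obj ell V h s phi ws.
  apply: obj_local => j jL; apply: funext => x; rewrite /ext addKn.
  case: insubP => [i _ vi|]; last by rewrite jL.
  by rewrite leq_addr !ffunE vi.
pose F g := mpc_obj ell V h s (ext g) ws.
have [g0 _ Hg0] := @arg_maxP _ _ _ (restr (fun _ _ => a0)) predT F isT.
exists (ext g0) => phi'.
by rewrite -extK; apply: Hg0.
Qed.

Definition mpcphi ell V (a0 : 'I_A) h s (ws : nat -> outc M) : nat -> 'I_n -> 'I_A :=
  sel (fun _ _ => a0) (fun phi => forall phi', mpc_obj ell V h s phi' ws <= mpc_obj ell V h s phi ws).

Lemma mpcphi_max ell V a0 h s ws phi' :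
  mpc_obj ell V h s phi' ws <= mpc_obj ell V h s (mpcphi ell V a0 h s ws) ws.
Proof.
have := @selP _ (fun _ _ => a0)
  (fun phi => forall phi', mpc_obj ell V h s phi' ws <= mpc_obj ell V h s phi ws)
  (obj_max ell V h s ws a0).
by move=> /(_ phi').
Qed.

Definition mpcpol ell V (a0 : 'I_A) : nat -> 'I_n -> (nat -> outc M) -> 'I_A :=
  fun h s ws => mpcphi ell V a0 h s ws h s.

Lemma mpcpol_mpc ell V a0 : is_mpc M ell V (mpcpol ell V a0).
Proof.
split.
  move=> h s ws ws' Hi; rewrite /mpcpol /mpcphi.
  have -> : (fun phi => forall phi', mpc_obj ell V h s phi' ws <= mpc_obj ell V h s phi ws) =
            (fun phi => forall phi', mpc_obj ell V h s phi' ws' <= mpc_obj ell V h s phi ws').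
    have E := obj_info V Hi.
    apply: funext => phi; apply: propext; split => Hp phi'.
      by rewrite -!E; apply: Hp.
    by rewrite !E; apply: Hp.
  by [].
move=> h s ws _; exists (mpcphi ell V a0 h s ws); split => //.
exact: mpcphi_max.
Qed.

End Gen.

Section Cons.
Variables (R : realType) (A H ell : nat).
Hypotheses (hell : (2 <= ell)%N) (hA : (2 <= A)%N) (hH : (ell.+1 <= H)%N).

Definition NN := (A ^ ell.-1)%N.

Lemma NN_gt1 : (1 < NN)%N.
Proof.
rewrite /NN; apply: (@leq_trans (A ^ 1)); first by rewrite expn1.
by rewrite leq_pexp2l //; [lia | lia].
Qed.

Lemma NN_gt0 : (0 < NN)%N. Proof. by have := NN_gt1; lia. Qed.

Definition sS := NN.
Definition sC := NN.+1.
Definition sT := NN.+2.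
Definition nS := NN.+3.
Definition nK := NN.-1.
Definition Om := 'I_nK.+1.
Definition St := 'I_nS.

Lemma nK1 : nK.+1 = NN. Proof. by rewrite /nK prednK // NN_gt0. Qed.

Definition fnext (h x a : nat) : nat :=
  if h == 0%N then (if x == sS then (if a == 0%N then 0%N else sC) else sT)
  else if (h < ell)%N then
    (if (x < NN)%N then ((x * A + a) %% NN)%N
     else if x == sC then (if h == ell.-1 then 0%N else sC) else sT)
  else sT.

Lemma fnext_le h x a : (fnext h x a < nS)%N.
Proof.
rewrite /fnext /nS /sC /sT.
case: ifP => _; first by case: ifP => _; [case: ifP|].
case: ifP => _ //; case: ifP => _; last by case: ifP => _ //; case: ifP.
by apply: (@ltn_trans NN); [rewrite ltn_mod NN_gt0 | lia].
Qed.

Definition eps : R := (NN%:R)^-1.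

Definition pr (h : nat) (w : Om) : R :=
  if h == ell then eps else if val w == 0%N then 1 else 0.

Definition rw (h : nat) (w : Om) (x : St) (a : 'I_A) : R :=
  if (h == 0%N) && (val x == sS) && (val a != 0%N) then eps
  else if (h == ell) && (val x < NN)%N && (val w == val x) then 1 else 0.

Definition nx (h : nat) (w : Om) (x : St) (a : 'I_A) : St :=
  @inord NN.+2 (fnext h (val x) (val a)).

Lemma nxE h w x a : val (nx h w x a) = fnext h (val x) (val a).
Proof. by rewrite /nx /=; apply: inordK; apply: fnext_le. Qed.

Lemma NNR_gt0 : (0 : R) < NN%:R. Proof. by rewrite ltr0n NN_gt0. Qed.

Lemma eps_ge0 : (0 : R) <= eps. Proof. by rewrite /eps invr_ge0 ltW // NNR_gt0. Qed.
Lemma eps_lt1 : eps < 1.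
Proof. by rewrite /eps invf_lt1 ?NNR_gt0 // ltr1n NN_gt1. Qed.

Lemma sum_ind0 : \sum_(w : Om) (if val w == 0%N then (1 : R) else 0) = 1.
Proof.
rewrite big_ord_recl /= big1 ?addr0 //.

Qed.

Lemma sum_eps : \sum_(w : Om) eps = 1.
Proof.
rewrite sumr_const card_ord nK1 /eps -[LHS]mulr_natr.
rewrite mulVf //. by rewrite gt_eqF // NNR_gt0.
Qed.

Lemma pr_ge0 h w : (h < H)%N -> 0 <= pr h w.
Proof. by move=> _; rewrite /pr; case: ifP => _; [apply: eps_ge0 | case: ifP]. Qed.

Lemma pr_sum1 h : (h < H)%N -> \sum_w pr h w = 1.
Proof.
move=> _; rewrite /pr; case: (h == ell); [exact: sum_eps | exact: sum_ind0].
Qed.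

Lemma rw_range h w s a : (h < H)%N -> 0 <= rw h w s a <= 1.
Proof.
move=> _; rewrite /rw; case: ifP => _.
  by rewrite eps_ge0 ltW // eps_lt1.
by case: ifP => _; rewrite ?ler01 ?lexx.
Qed.

Definition M : mdp R A H nS := @MDP R A H nS nK pr rw nx pr_ge0 pr_sum1 rw_range.


Definition s1 : St := @inord NN.+2 sS.
Definition root : St := @inord NN.+2 0.
Definition sTo : St := @inord NN.+2 sT.

Lemma s1E : val s1 = sS. Proof. by rewrite /s1 /= inordK // /sS; lia. Qed.
Lemma rootE : val root = 0%N. Proof. by rewrite /root /= inordK. Qed.
Lemma sToE : val sTo = sT. Proof. by rewrite /sTo /= inordK. Qed.

Lemma ell_neq0 : (ell != 0)%N. Proof. by lia. Qed.

Lemma fnext0S a : fnext 0 sS a = if a == 0%N then 0%N else sC.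
Proof. by rewrite /fnext !eqxx. Qed.

Lemma fnext_node h x a : (0 < h < ell)%N -> (x < NN)%N -> fnext h x a = ((x * A + a) %% NN)%N.
Proof. move=> /andP[h0 hl] xN; rewrite /fnext hl xN; case: ifP => //; lia. Qed.

Lemma fnext_C h a : (0 < h < ell)%N -> fnext h sC a = if h == ell.-1 then 0%N else sC.
Proof.
move=> /andP[h0 hl]; rewrite /fnext hl.
case: ifP; first lia. move=> _.
rewrite ifF; first by rewrite eqxx.
rewrite /sC; lia.
Qed.

Lemma fnext_late h x a : (ell <= h)%N -> fnext h x a = sT.
Proof. move=> hl; rewrite /fnext; case: ifP; first lia. by rewrite ltnNge hl. Qed.

Lemma fnext_T h a : fnext h sT a = sT.
Proof.
rewrite /fnext /sT /sS /sC; case: ifP => _; first by case: ifP => //; lia.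
case: ifP => _ //; case: ifP; first lia.
by case: ifP => //; lia.
Qed.

Lemma rw_zero h w x a : h != 0%N -> h != ell -> rw h w x a = 0.
Proof. by move=> h0 hl; rewrite /rw (negPf h0) (negPf hl). Qed.

Lemma node_ord (x : St) : (x < NN)%N -> (val x <= nK)%N.
Proof. by move=> xN; rewrite -ltnS nK1. Qed.

Lemma sttS h s phi (ws : nat -> outc M) k :
  stt h s phi ws k.+1 = nx (h + k) (ws (h + k)%N) (stt h s phi ws k) (phi (h + k)%N (stt h s phi ws k)).
Proof. by []. Qed.

Lemma tree_path phi (ws : nat -> outc M) k :
  val (phi 0%N s1) = 0%N -> (0 < k <= ell)%N -> (val (stt 0 s1 phi ws k) < NN)%N.
Proof.
move=> p0; elim: k => [//|k IH] /andP[_ kl].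
rewrite sttS nxE add0n.
case: k IH kl => [|k] IH kl.
  by rewrite /= s1E fnext0S p0 eqxx NN_gt0.
rewrite fnext_node; first by rewrite ltn_mod NN_gt0.
  by apply/andP; split => //.
by apply: IH; apply/andP; split => //; apply: ltnW.
Qed.

Lemma alt_pathC phi (ws : nat -> outc M) k :
  val (phi 0%N s1) != 0%N -> (0 < k < ell)%N -> val (stt 0 s1 phi ws k) = sC.
Proof.
move=> p0; elim: k => [//|k IH] /andP[_ kl].
rewrite sttS nxE add0n.
case: k IH kl => [|k] IH kl.
  by rewrite /= s1E fnext0S (negPf p0).
rewrite IH; last by apply/andP; split => //; apply: ltnW.
rewrite fnext_C; last by apply/andP; split; lia.
by case: ifP => //; lia.
Qed.

Lemma alt_path phi (ws : nat -> outc M) :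
  val (phi 0%N s1) != 0%N -> val (stt 0 s1 phi ws ell) = 0%N.
Proof.
move=> p0; have -> : ell = (ell.-1).+1 by lia.
rewrite sttS nxE add0n alt_pathC //; last by apply/andP; split; lia.
by rewrite fnext_C ?eqxx //; apply/andP; split; lia.
Qed.

Lemma lh0 : lh H ell 0 = ell.
Proof. by rewrite /lh subn0; apply/minn_idPl; apply: ltnW. Qed.

Lemma obj0 V phi (ws : nat -> outc M) :
  mpc_obj ell V 0 s1 phi ws =
  (if val (phi 0%N s1) != 0%N then eps else 0) + V ell (stt 0 s1 phi ws ell).
Proof.
rewrite /mpc_obj lh0; congr (_ + _); last by rewrite /Vterm add0n hH.
have -> : ell = (ell.-1).+1 by lia.
rewrite big_ord_recl big1 ?addr0; last first.
  move=> i _; rewrite /rwd /= rw_zero //; rewrite /bump /=; have := ltn_ord i; lia.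
rewrite /rwd /= /rw s1E eqxx /=.
case: ifP => // _; rewrite (_ : (0 == ell)%N = false) //; lia.
Qed.

Lemma sT_neq : (sT != sS) && ~~ (sT < NN)%N && (sT != sC).
Proof. rewrite /sT /sS /sC; apply/andP; split; [apply/andP; split|]; lia. Qed.

Lemma terminal_T : terminal M sTo.
Proof.
move=> h w a _ _; split.
  by apply: val_inj; rewrite /= nxE sToE fnext_T; rewrite sToE.
rewrite /= /rw sToE.
have /andP[/andP[/negPf -> /negPf ->] _] := sT_neq.
by rewrite !andbF.
Qed.

Lemma semi_node (x : St) : (val x < NN)%N -> semi_terminal M ell x.
Proof.
move=> xN w a _.
have -> : nxt (m:=M) ell w x a = sTo.
  by apply: val_inj; rewrite /= nxE sToE fnext_late.
exact: terminal_T.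
Qed.

Lemma rlaw_node (x : St) : (val x < NN)%N ->
  rlaw M ell x = (fun v => \sum_(w : Om | (\row_(a < A) (if w == ord0 then (1:R) else 0)) == v) eps).
Proof.
move=> xN; apply: funext => v; rewrite /rlaw /=.
pose u : Om := inord (val x).
have uE : val u = val x by rewrite /u /= inordK // -ltnS nK1.
transitivity (\sum_(w : Om | (\row_(a < A) (if w == u then (1:R) else 0)) == v) eps).
  apply: eq_big => w.
    congr (_ == v); apply/matrixP => i j; rewrite !mxE /rw (negPf ell_neq0) eqxx xN /=.
    by rewrite -uE.
  by move=> _; rewrite /pr eqxx.
rewrite (reindex_inj (h := tperm u ord0) (@perm_inj _ (tperm u ord0))) /=.
apply: eq_bigl => j.
have E : (tperm u ord0 j == u) = (j == ord0).
  apply/eqP/eqP => [e|->]; last by rewrite tpermR.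
  by apply: (@perm_inj _ (tperm u ord0)); rewrite e tpermR.
by rewrite E.
Qed.

Lemma eps_gt0 : (0 : R) < eps. Proof. by rewrite /eps invr_gt0 NNR_gt0. Qed.

Lemma pip_alt (Vp : nat -> St -> R) pip :
  is_mpc M ell Vp pip -> (forall x : St, (val x < NN)%N -> Vp ell x = Vp ell root) ->
  forall ws, val (pip 0%N s1 ws) != 0%N.
Proof.
move=> [_ Hm] HV ws.
have H0 : (0 < H)%N by lia.
have [phi [Hmax Heq]] := Hm 0%N s1 ws H0.
rewrite -Heq; apply/negP => /eqP p0.
pose a1 : 'I_A := Ordinal hA.
pose phi' := fun t x => if t == 0%N then a1 else phi t x.
have := Hmax phi'; rewrite !obj0.
have p1 : val (phi' 0%N s1) != 0%N by rewrite /phi' eqxx.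
rewrite p1 p0 eqxx /= add0r.
rewrite HV; last by rewrite alt_path // NN_gt0.
rewrite HV; last by apply: tree_path => //; apply/andP; split; lia.
by rewrite gerDr leNgt eps_gt0.
Qed.

Definition wsj (j : Om) : nat -> outc M := fun t => if t == ell then j else ord0.

Definition ellH : 'I_H := Ordinal hH.
Lemma H0 : (0 < H)%N. Proof. by lia. Qed.
Definition zH : 'I_H := Ordinal H0.

Lemma value_red pi : value M pi s1 = eps * \sum_(j : Om) ret pi s1 (wsj j).
Proof.
rewrite /value.
pose e (j : Om) : {ffun 'I_H -> outc M} := [ffun i : 'I_H => if val i == ell then j else ord0].
have wsE j : ws_of (e j) = wsj j.
  apply: funext => t; rewrite /ws_of /wsj.
  case: insubP => [i _ <-|nt] /=; first by rewrite ffunE.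
  by rewrite ifF //; apply/negP => /eqP te; move: nt; rewrite te hH.
have eE j : e j ellH = j by rewrite ffunE /= eqxx.
have prodE (wf : {ffun 'I_H -> outc M}) :
    \prod_(i < H) pr i (wf i) = if wf == e (wf ellH) then eps else 0.
  case: eqP => [wfE|ne].
    rewrite (bigD1 ellH) //= /pr eqxx big1 ?mulr1 // => i ni.
    have vi : (val i == ell) = false.
      by apply/negP => /eqP vi; move/negP: ni; apply; apply/eqP; apply: val_inj.
    by rewrite vi wfE ffunE vi.
  have [i hi] : exists i, wf i != e (wf ellH) i.
    case: (pselect (exists i, wf i != e (wf ellH) i)) => // hn.
    exfalso; apply: ne; apply/ffunP => i; apply/eqP; apply/negPn/negP => h.
    by apply: hn; exists i.
  have vi : (val i == ell) = false.
    apply/negP => /eqP vi; move: hi.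
    by rewrite (_ : i = ellH) ?eE ?eqxx //; apply: val_inj.
  rewrite (bigD1 i) //= /pr vi.
  move: hi; rewrite ffunE vi => hi.
  have -> : (val (wf i) == 0%N) = false.
    by apply/negP => /eqP w0; move/negP: hi; apply; apply/eqP; apply: val_inj.
  by rewrite mul0r.
rewrite (eq_bigr (fun wf : {ffun 'I_H -> outc M} => if wf == e (wf ellH) then eps * ret pi s1 (ws_of wf) else 0)); last first.
  by move=> wf _; rewrite prodE; case: ifP => _; rewrite ?mul0r.
rewrite (partition_big (fun wf : {ffun 'I_H -> outc M} => wf ellH) xpredT) //=.
rewrite mulr_sumr; apply: eq_bigr => j _.
rewrite (bigD1 (e j)) /=; last by rewrite eE.
rewrite eE eqxx wsE big1 ?addr0 // => wf /andP[/eqP wj ne].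
by rewrite wj (negPf ne).
Qed.

Lemma traj_stt pi (ws : nat -> outc M) k :
  traj pi s1 ws k = stt 0 s1 (fun t x => pi t x ws) ws k.
Proof. by elim: k => //= k ->; rewrite add0n. Qed.

Lemma ret_split pi (ws : nat -> outc M) : ret pi s1 ws =
  rw 0 (ws 0%N) s1 (pi 0%N s1 ws) +
  rw ell (ws ell) (traj pi s1 ws ell) (pi ell (traj pi s1 ws ell) ws).
Proof.
rewrite /ret (bigD1 zH) //= (bigD1 ellH) /=; last first.
  apply/negP => /eqP /(congr1 val) /= el; lia.
rewrite [X in _ + (_ + X)]big1 ?addr0 // => i /andP[n0 nE].
have v0 : (val i != 0%N).
  by apply/negP => /eqP vi; move/negP: n0; apply; apply/eqP; apply: val_inj.
have vE : (val i != ell).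
  by apply/negP => /eqP vi; move/negP: nE; apply; apply/eqP; apply: val_inj.
by rewrite rw_zero.
Qed.

Lemma ret_alt pi (ws : nat -> outc M) : val (pi 0%N s1 ws) != 0%N ->
  ret pi s1 ws = eps + (if val (ws ell) == 0%N then 1 else 0).
Proof.
move=> a0; rewrite ret_split; congr (_ + _).
  by rewrite /rw s1E !eqxx a0.
have tE : val (traj pi s1 ws ell) = 0%N.
  by rewrite traj_stt; apply: alt_path.
by rewrite /rw (negPf ell_neq0) tE eqxx NN_gt0 /=.
Qed.

Lemma ret_tree pi (ws : nat -> outc M) : val (pi 0%N s1 ws) = 0%N -> ret pi s1 ws <= 1.
Proof.
move=> a0; rewrite ret_split.
have -> : rw 0 (ws 0%N) s1 (pi 0%N s1 ws) = 0.
  rewrite /rw a0 eqxx andbF /= ifF //.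
  apply/negP => /andP[/andP[/eqP e _] _]; lia.
rewrite add0r; have /andP[_ ->] := rw_range (ws ell) (traj pi s1 ws ell) (pi ell (traj pi s1 ws ell) ws) hH.
by [].
Qed.

Lemma wsj_ne j j' t : t != ell -> wsj j t = wsj j' t.
Proof. by move=> te; rewrite /wsj (negPf te). Qed.

Lemma look0 pi : is_lookahead M ell pi -> forall j, pi 0%N s1 (wsj j) = pi 0%N s1 (wsj ord0).
Proof.
move=> Hl j; apply: Hl => phi k; rewrite lh0 => kl; split.
  rewrite /rwd add0n.
  rewrite (@stt_ext _ _ _ _ M 0 s1 phi phi (wsj j) (wsj ord0)); last first.
    by move=> i ik; split => //; apply: wsj_ne; rewrite add0n; lia.
  by rewrite (@wsj_ne j ord0 k) //; lia.
apply: stt_ext => i ik; split => //; apply: wsj_ne; rewrite add0n; lia.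
Qed.

Lemma two_eps : 2 * eps <= 1.
Proof.
rewrite /eps -/(_ / _) ler_pdivrMr ?NNR_gt0 // mul1r.
by rewrite (ler_nat R 2 NN) NN_gt1.
Qed.

Lemma value_bound pi : is_lookahead M ell pi ->
  value M pi s1 <= (if val (pi 0%N s1 (wsj ord0)) != 0%N then 2 * eps else 1).
Proof.
move=> Hl; rewrite value_red; case: ifP => alt.
  rewrite (eq_bigr (fun j : Om => eps + (if val j == 0%N then 1 else 0))); last first.
    move=> j _; rewrite ret_alt; last by rewrite look0.
    by rewrite /wsj eqxx.
  by rewrite big_split /= sum_eps sum_ind0 mulrC.
apply: (@le_trans _ _ (eps * \sum_(j : Om) (1 : R))).
  rewrite ler_wpM2l ?eps_ge0 //; apply: ler_sum => j _; apply: ret_tree.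
  by rewrite look0 //; apply/eqP; move/negbT: alt; rewrite negbK.
rewrite sumr_const card_ord nK1 /eps.
by rewrite mulVf // gt_eqF // NNR_gt0.
Qed.

Lemma value_le1 pi : is_lookahead M ell pi -> value M pi s1 <= 1.
Proof.
move=> Hl; apply: le_trans (value_bound Hl) _.
by case: ifP => _; rewrite ?two_eps.
Qed.

Definition Vstar (h : nat) (x : St) : R :=
  if (h == ell) && (0 < val x < NN)%N then 1 else 0.

Lemma A0 : (0 < A)%N. Proof. by lia. Qed.
Definition a0 : 'I_A := Ordinal A0.

Definition pistar := mpcpol (M:=M) ell Vstar a0.

Lemma node_stay h (x : St) phi (ws : nat -> outc M) k :
  (0 < h)%N -> (val x < NN)%N -> (h + k <= ell)%N -> (val (stt h x phi ws k) < NN)%N.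
Proof.
move=> h0 xN; elim: k => [//|k IH] hk.
rewrite sttS nxE fnext_node ?ltn_mod ?NN_gt0 //.
  by apply/andP; split; lia.
by apply: IH; lia.
Qed.

Lemma reach (ws : nat -> outc M) m : (m <= ell.-1)%N -> forall j, (j < A ^ m)%N ->
  exists phi, val (stt 1 root phi ws m) = j.
Proof.
elim: m => [|m IH] hm j hj.
  by exists (fun _ _ => a0); rewrite /= rootE; move: hj; rewrite expn0; lia.
have [|phi Hphi] := IH (ltnW hm) (j %/ A)%N.
  by rewrite ltn_divLR ?A0 // -expnSr.
have rA : (j %% A < A)%N by rewrite ltn_mod A0.
pose phi' := fun t x => if t == m.+1 then Ordinal rA else phi t x.
exists phi'.
rewrite sttS nxE.
rewrite (@stt_ext _ _ _ _ M 1 root phi' phi ws ws); last first.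
  by move=> i im; split => //; rewrite /phi'; apply: funext => x; rewrite ifF //; lia.
rewrite Hphi /phi' add1n eqxx /=.
have AmN : (A ^ m.+1 <= NN)%N by rewrite /NN leq_pexp2l //; lia.
have qN : (j %/ A < NN)%N.
  apply: (@leq_trans (A ^ m)); first by rewrite ltn_divLR ?A0 // -expnSr.
  by apply: leq_trans AmN; rewrite leq_pexp2l //; lia.
have hm1 : (0 < m.+1 < ell)%N by apply/andP; split; lia.
rewrite fnext_node //= -divn_eq modn_small //.
exact: leq_trans hj AmN.
Qed.

Lemma lh_mid h : (0 < h < ell)%N -> (ell - h < lh H ell h)%N.
Proof. move=> /andP[h0 hl]; rewrite /lh; have := hH; lia. Qed.

Lemma objmid h (x : St) phi (ws : nat -> outc M) : (0 < h < ell)%N -> (val x < NN)%N ->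
  mpc_obj ell Vstar h x phi ws =
  if val (ws ell) == val (stt h x phi ws (ell - h)) then 1 else 0.
Proof.
move=> hh xN; have hL := lh_mid hh.
move: hh => /andP[h0 hl].
rewrite /mpc_obj (bigD1 (Ordinal hL)) //= big1; last first.
  move=> i ni; rewrite /rwd rw_zero //; first lia.
  apply/negP => /eqP e; move/negP: ni; apply; apply/eqP; apply: val_inj => /=; lia.
have -> : Vterm H Vstar (h + lh H ell h) (stt h x phi ws (lh H ell h)) = 0.
  rewrite /Vterm /Vstar; case: ifP => // _; rewrite ifF //.
  by apply/negP => /andP[/eqP e _]; move: hL; lia.
rewrite !addr0 /rwd.
have -> : (h + (ell - h) = ell)%N by lia.
rewrite /= /rw (negPf ell_neq0) /= eqxx node_stay //; last by lia.
have E : @Algebra.add _ h (ell - h)%N = ell :> nat by change ((h + (ell - h))%N = ell); lia.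
by rewrite E.
Qed.

Lemma pistar0 (ws : nat -> outc M) : val (pistar 0%N s1 ws) = 0%N.
Proof.
rewrite /pistar /mpcpol.
set phis := mpcphi _ _ _ _ _ _.
have Hmax := mpcphi_max (M:=M) ell Vstar a0 0 s1 ws.
rewrite -/phis in Hmax.
apply/eqP; apply/negPn/negP => alt.
have [phir Hr] := @reach ws ell.-1 (leqnn _) 1%N NN_gt1.
pose phi1 := fun t x => if t == 0%N then a0 else phir t x.
have := Hmax phi1; rewrite !obj0.
have -> : val (phi1 0%N s1) != 0%N = false by rewrite /phi1 eqxx.
have -> : Vstar ell (stt 0 s1 phis ws ell) = 0.
  by rewrite /Vstar alt_path // ltnn andbF.
have -> : Vstar ell (stt 0 s1 phi1 ws ell) = 1.
  have E : ell = (ell.-1).+1 by lia.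
  have -> : stt 0 s1 phi1 ws ell = stt 0 s1 phi1 ws (ell.-1).+1 by rewrite -E.
  rewrite stt_shift.
  have -> : stt 0 s1 phi1 ws 1 = root.
    by apply: val_inj; rewrite /= nxE rootE s1E /phi1 /= fnext0S.
  rewrite (@stt_ext _ _ _ _ M 1 root phi1 phir ws ws); last first.
    by move=> i _; split => //; rewrite /phi1; apply: funext => x; rewrite ifF.
  by rewrite /Vstar Hr eqxx NN_gt1.
rewrite alt add0r addr0.
by rewrite leNgt eps_lt1.
Qed.

Lemma om_lt (w : Om) : (val w < NN)%N.
Proof. have := ltn_ord w; rewrite {2}nK1 //. Qed.

Lemma naddE (a b : nat) : @Algebra.add _ a b = (a + b)%N. Proof. by []. Qed.

Lemma pistar_inv (ws : nat -> outc M) k : (0 < k <= ell)%N ->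
  (val (traj pistar s1 ws k) < NN)%N /\
  exists phi, val (stt k (traj pistar s1 ws k) phi ws (ell - k)) = val (ws ell).
Proof.
elim: k => [//|k IH] /andP[_ kl].
case: k IH kl => [|k] IH kl.
  have t1 : traj pistar s1 ws 1 = root.
    by apply: val_inj; rewrite /= nxE s1E pistar0 fnext0S rootE.
  rewrite t1 rootE; split; first exact: NN_gt0.
  apply: reach; first by rewrite subn1.
  by rewrite subn1; apply: om_lt.
have [|xN [phir Hr]] := IH; first by apply/andP; split; lia.
set x := traj pistar s1 ws k.+1 in xN Hr *.
have hk : (0 < k.+1 < ell)%N by apply/andP; split; lia.
set phis := mpcphi (M:=M) ell Vstar a0 k.+1 x ws.
have Hm := mpcphi_max (M:=M) ell Vstar a0 k.+1 x ws phir.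
rewrite -/phis !objmid // Hr eqxx in Hm.
have E : val (ws ell) == val (stt k.+1 x phis ws (ell - k.+1)).
  by move: Hm; case: ifP => // _; rewrite leNgt ltr01; exact: id.
have tE : traj pistar s1 ws k.+2 = stt k.+1 x phis ws 1.
  by rewrite /= naddE addn0.
split.
  by rewrite tE /= nxE naddE addn0 (fnext_node _ hk xN) ltn_mod NN_gt0.
exists phis; rewrite tE -stt_shift.
have -> : (ell - k.+2).+1 = (ell - k.+1)%N by lia.
by apply/esym/eqP.
Qed.

Lemma ret_pistar (ws : nat -> outc M) : ret pistar s1 ws = 1.
Proof.
rewrite ret_split.
have -> : rw 0 (ws 0%N) s1 (pistar 0%N s1 ws) = 0.
  rewrite /rw pistar0 eqxx andbF /= ifF //.
  apply/negP => /andP[/andP[/eqP e _] _]; lia.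
have [|xN [phi Hp]] := @pistar_inv ws ell; first by apply/andP; split; lia.
rewrite subnn /= in Hp.
by rewrite add0r /rw (negPf ell_neq0) /= eqxx xN Hp eqxx.
Qed.

Lemma value_pistar : value M pistar s1 = 1.
Proof.
rewrite value_red.
rewrite (eq_bigr (fun _ => 1)); last by move=> j _; apply: ret_pistar.
rewrite sumr_const card_ord nK1 /eps.
by rewrite mulVf // gt_eqF // NNR_gt0.
Qed.

Lemma pistar_look : is_lookahead M ell pistar.
Proof. by case: (@mpcpol_mpc _ _ _ _ M ell Vstar a0). Qed.

Lemma nS_bound : (nS <= A ^ ell + ell + 1)%N.
Proof.
have E : (A ^ ell = A * NN)%N by rewrite /NN -expnS prednK // (ltnW hell).
rewrite E /nS.
have := NN_gt1; have : (2 * NN <= A * NN)%N by rewrite leq_mul2r hA orbT.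
lia.
Qed.

Lemma pow_bound : 2 * eps <= (A%:R : R) `^ (1 - ell%:R / 2).
Proof.
set a : R := A%:R.
have a2 : 2 <= a by rewrite /a (ler_nat R 2 A).
have a1 : 1 <= a by apply: le_trans a2; rewrite ler1n.
have NNE : (NN%:R : R) = a `^ (ell.-1)%:R by rewrite powR_mulrn ?natrX // (le_trans ler01 a1).
rewrite /eps -/(_ / _) ler_pdivrMr ?NNR_gt0 // NNE -powRD; last first.
  by apply/implyP => _; rewrite /a pnatr_eq0; lia.
have -> : 1 - ell%:R / 2 + (ell.-1)%:R = ell%:R / 2 :> R.
  have E : (ell%:R : R) = (ell.-1)%:R + 1 by rewrite natr1 prednK // (ltnW hell).
  rewrite E; field.
  by [].
apply: le_trans a2 _.
rewrite -{1}(powRr1 (le_trans ler01 a1)).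
apply: ler_powR => //.
rewrite ler_pdivlMr // mul1r (ler_nat R 2 ell); lia.
Qed.

End Cons.

Unset Implicit Arguments.

Theorem claim2 (R : realType) (A H ell : nat)
  (Vp : forall n, mdp R A H n -> nat -> 'I_n -> R)
  (pip : forall n (M : mdp R A H n), nat -> 'I_n -> (nat -> outc M) -> 'I_A) :
  (2 <= ell)%N -> (2 <= A)%N -> (ell.+1 <= H)%N ->
  (forall h, (h < H)%N ->
     exists f : ('rV[R]_A -> R) -> R, (forall mu, 0 <= f mu) /\
       forall n (M : mdp R A H n) (s : 'I_n),
         semi_terminal M h s -> Vp n M h s = f (rlaw M h s)) ->
  (forall n (M : mdp R A H n), is_mpc M ell (Vp n M) (pip n M)) ->
  exists n (M : mdp R A H n) (s1 : 'I_n),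
    (n <= A ^ ell + ell + 1)%N /\ det_trans M /\
    exists pistar, is_lookahead M ell pistar /\
      (forall pi, is_lookahead M ell pi -> value M pi s1 <= value M pistar s1) /\
      0 < value M pistar s1 /\
      value M (pip n M) s1 / value M pistar s1 <= (A%:R) `^ (1 - ell%:R / 2) /\
      exists V pi', is_mpc M ell V pi' /\ value M pi' s1 = value M pistar s1.
Proof.
move=> hell hA hH Hf Hmpc.
pose MM := M R hell hA hH.
exists (nS A ell), MM, (s1 A ell).
split; first exact: nS_bound.
split; first by move=> h w w' s a _ _ _.
exists (@pistar R A H ell hell hA hH).
split; first exact: pistar_look.
split; first by move=> pi Hl; rewrite value_pistar; apply: value_le1.
split; first by rewrite value_pistar ltr01.
split.
  rewrite value_pistar divr1.
  have [Hl _] := Hmpc _ MM.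
  have HV : forall x : St A ell, (val x < NN A ell)%N ->
      Vp _ MM ell x = Vp _ MM ell (root A ell).
    move=> x xN; have [f [_ Hf']] := Hf ell hH.
    have rN : (val (root A ell) < NN A ell)%N by rewrite rootE; exact: (NN_gt0 hell hA hH).
    rewrite (Hf' _ MM x (@semi_node R A H ell hell hA hH x xN)).
    rewrite (Hf' _ MM (root A ell) (@semi_node R A H ell hell hA hH _ rN)).
    by rewrite (@rlaw_node R A H ell hell hA hH x xN) (@rlaw_node R A H ell hell hA hH _ rN).
  apply: le_trans (value_bound Hl) _.
  rewrite (pip_alt (Hmpc _ MM) HV).
  exact: pow_bound.
exists (Vstar R (A:=A) (ell:=ell)), (@pistar R A H ell hell hA hH); split => //.
exact: mpcpol_mpc.
Qed.
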